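(* Assume $CA_2$. Then there are two $\omega_1$-dense sets of reals which are not order isomorphic.
   Context: A set $A\subseteq\mathbb R$ is $\omega_1$-dense if $|(a,b)\cap A|=\omega_1$ for all reals $a<b$. A type is a sequence $\tau=\{(m_k,n_{k+1},r_{k+1})\}_{k\in\omega}$ of natural numbers with $m_0=1$; $n_k\ge2$ for $k\ge1$; every $r\in\omega$ equals $r_k$ for infinitely many $k$; $m_k>r_{k+1}$; and $m_{k+1}=r_{k+1}+(m_k-r_{k+1})n_{k+1}$ for all $k$. For a set of ordinals $X$ and $\mathcal F\subseteq[X]^{<\omega}$, $\mathcal F_k$ is the set of elements of rank $k$ in $(\mathcal F,\subsetneq)$; $A\sqsubseteq B$ means $A\subseteq B$ and every element of $B$ below an element of $A$ is in $A$; $A<B$ means every element of $A$ is below every element of $B$. $\mathcal F$ is a construction scheme over $X$ of type $\tau$ if (1) every finite subset of $X$ lies in a member of $\mathcal F$; (2) $|F|=m_k$ for $F\in\mathcal F_k$; (3) $E\cap F\sqsubseteq E,F$ for $E,F\in\mathcal F_k$; (4) each $F\in\mathcal F_{k+1}$ is the union of uniquely determined $F_0,\dots,F_{n_{k+1}-1}\in\mathcal F_k$ forming a $\Delta$-system with root $R(F)$, $|R(F)|=r_{k+1}$, $R(F)<F_0\setminus R(F)<\dots<F_{n_{k+1}-1}\setminus R(F)$. For a construction scheme $\mathcal F$ over $\omega_1$, $l\ge1$, $F\in\mathcal F_l$ and finite $\mathcal C\subseteq[\omega_1]^{<\omega}$: $F$ captures $\mathcal C$ if $|\mathcal C|\le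 n_l$ and $\mathcal C$ can be enumerated as $\{c_i\}_{i<|\mathcal C|}$ with $c_i\subseteq F_i$, $c_i\setminus R(F)\neq\emptyset$ and $\phi_i[c_0]=c_i$ where $\phi_i:F_0\to F_i$ is the increasing bijection. $\mathcal F$ is $n$-capturing if for every uncountable $S\subseteq[\omega_1]^{<\omega}$ and every $k\in\omega$ there are $\mathcal C\in[S]^n$, $l>k$ and $F\in\mathcal F_l$ capturing $\mathcal C$. $CA_n$ is the statement: for every type $\tau$ with $n\le n_k$ for all $k\ge1$ there is an $n$-capturing construction scheme over $\omega_1$ of type $\tau$. *)

(* Defs.v *)
From HB Require Import structures.
From mathcomp Require Import all_boot all_order all_algebra finmap.
From mathcomp Require Import boolp classical_sets functions cardinality reals.
Set Implicit Arguments. Unset Strict Implicit. Unset Printing Implicit Defensive.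
Import Order.TTheory GRing.Theory Num.Theory.
Local Open Scope order_scope.

(* A well-ordered type that is uncountable but all of whose proper initial
   segments are countable: this is exactly (a copy of) omega_1. *)
Definition omega1_like (d : Order.disp_t) (W : orderType d) : Prop :=
  [/\ well_founded (fun x y : W => x < y),
      ~ countable [set: W] &
      forall x : W, countable [set y : W | y < x]].

(* The type {(m_k, n_{k+1}, r_{k+1})}_k is given by three sequences
   m, n, r : nat -> nat (values n 0, r 0 are irrelevant). *)
Definition is_type (m n r : nat -> nat) : Prop :=
  [/\ m 0 = 1%N,
      (forall k, (1 <= k)%N -> (2 <= n k)%N),
      (forall r0 N, exists k, (N < k)%N /\ r k = r0),
      (forall k, (r k.+1 < m k)%N) &
      (forall k, m k.+1 = r k.+1 + (m k - r k.+1) * n k.+1)%N].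

Section Scheme.
Context {d : Order.disp_t} {W : orderType d}.
Local Open Scope fset_scope.

(* rank in (fam, proper inclusion): rank F = sup { rank E + 1 | E in fam, E proper subset of F } *)
Fixpoint rnk (fam : set {fset W}) (fuel : nat) (F : {fset W}) : nat :=
  match fuel with
  | 0 => 0%N
  | fuel'.+1 =>
      \max_(E <- enum_fset (fpowerset F) | `[< fam E >] && fproper E F)
         (rnk fam fuel' E).+1
  end.
Definition rank (fam : set {fset W}) (F : {fset W}) : nat := rnk fam #|` F| F.

Definition finit (A B : {fset W}) : Prop :=
  fsubset A B /\ (forall b a, b \in B -> a \in A -> b < a -> b \in A).
Definition fltS (A B : {fset W}) : Prop :=
  forall a b, a \in A -> b \in B -> a < b.

Definition decomp_props (fam : set {fset W}) (n r : nat -> nat) (k : nat)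
    (F : {fset W}) (Fs : nat -> {fset W}) (R : {fset W}) : Prop :=
  [/\ forall i, (i < n k.+1)%N -> fam (Fs i) /\ rank fam (Fs i) = k,
      F = (\bigcup_(i <- iota 0 (n k.+1)) Fs i)%fset,
      (forall i j, (i < n k.+1)%N -> (j < n k.+1)%N -> i <> j -> fsetI (Fs i) (Fs j) = R),
      #|` R| = r k.+1 &
      fltS R (fsetD (Fs 0) R) /\
      (forall i, (i.+1 < n k.+1)%N -> fltS (fsetD (Fs i) R) (fsetD (Fs i.+1) R))].

Definition construction_scheme (fam : set {fset W}) (m n r : nat -> nat) : Prop :=
  [/\ (forall A : {fset W}, exists F, fam F /\ fsubset A F),
      (forall F, fam F -> #|` F| = m (rank fam F)),
      (forall E F, fam E -> fam F -> rank fam E = rank fam F ->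
          finit (fsetI E F) E /\ finit (fsetI E F) F) &
      (forall k F, fam F -> rank fam F = k.+1 ->
          exists Fs R, decomp_props fam n r k F Fs R /\
            (forall Gs R', decomp_props fam n r k F Gs R' ->
                R' = R /\ forall i, (i < n k.+1)%N -> Gs i = Fs i))].

Definition captures (fam : set {fset W}) (n r : nat -> nat) (l : nat)
    (F : {fset W}) (C : {fset {fset W}}) : Prop :=
  (1 <= l)%N /\ (#|` C| <= n l)%N /\
  exists Fs R, decomp_props fam n r l.-1 F Fs R /\
  exists cs : seq {fset W},
    [/\ uniq cs, C =i cs &
      forall i, (i < size cs)%N ->
        let c0 := nth fset0 cs 0 in
        let ci := nth fset0 cs i in
        [/\ fsubset ci (Fs i), fsetD ci R != fset0 &
          exists phi : W -> W,
            [/\ (forall x y, x \in Fs 0 -> y \in Fs 0 -> x < y -> phi x < phi y),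
                [fset phi x | x in Fs 0] = Fs i &
                [fset phi x | x in c0] = ci]]].

Definition n_capturing (N : nat) (fam : set {fset W}) (n r : nat -> nat) : Prop :=
  forall S : set {fset W}, ~ countable S -> forall k : nat,
    exists C : {fset {fset W}},
      [/\ #|` C| = N, (forall c, c \in C -> S c) &
        exists l F, [/\ (k < l)%N, fam F, rank fam F = l & captures fam n r l F C]].

End Scheme.

Definition CA (N : nat) (d : Order.disp_t) (W : orderType d) : Prop :=
  forall m n r : nat -> nat, is_type m n r -> (forall k, (1 <= k)%N -> (N <= n k)%N) ->
    exists fam : set {fset W}, construction_scheme fam m n r /\ n_capturing N fam n r.

Local Open Scope ring_scope.
Definition omega1_dense (R : realType) (d : Order.disp_t) (W : orderType d) (A : set R) : Prop :=
  forall a b : R, a < b -> card_eq ([set x | a < x < b] `&` A) [set: W].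

Definition order_isomorphic (R : realType) (A B : set R) : Prop :=
  exists f : R -> R, set_bij A B f /\ (forall x y, A x -> A y -> x < y -> f x < f y).

(* Main.v *)
Require Import Defs.
From HB Require Import structures.
From mathcomp Require Import all_boot all_order all_algebra finmap.
From mathcomp Require Import boolp classical_sets functions cardinality reals.
From mathcomp Require Import zify ring lra.
Set Implicit Arguments. Unset Strict Implicit. Unset Printing Implicit Defensive.

Module PA.

Definition rr (k : nat) : nat := logn 2 k.
Definition nn (k : nat) : nat := 2.
Fixpoint mm (k : nat) : nat :=
  match k with 0 => 1 | k'.+1 => (rr k'.+1 + (mm k' - rr k'.+1) * 2)%N end.

Lemma rr_le k : (rr k.+1 <= k)%N.
Proof.
rewrite /rr.
have h1 : (2 ^ logn 2 k.+1 <= k.+1)%N by apply: dvdn_leq => //; exact: pfactor_dvdnn.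
have h2 : (logn 2 k.+1 < 2 ^ logn 2 k.+1)%N by apply: ltn_expl.
lia.
Qed.

Lemma mm_ge k : (k < mm k)%N.
Proof. elim: k => [|k IH] //=. have := rr_le k. lia. Qed.

Lemma mm_S k : (mm k < mm k.+1)%N.
Proof. rewrite /=. have := rr_le k; have := mm_ge k. lia. Qed.

Lemma mm_mono i j : (i < j)%N -> (mm i < mm j)%N.
Proof.
elim: j => // j IH; rewrite ltnS leq_eqVlt => /orP[/eqP->|/IH h]; first exact: mm_S.
exact: ltn_trans h (mm_S j).
Qed.

Lemma rr_lt k : (rr k.+1 < mm k)%N.
Proof. have := rr_le k; have := mm_ge k; lia. Qed.

Lemma is_type_ok : is_type mm nn rr.
Proof.
split => //.
- move=> r0 N; exists (2 ^ r0 * N.*2.+1)%N; split.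
    have : (0 < 2 ^ r0)%N by rewrite expn_gt0.
    move=> h; have : (N.*2.+1 <= 2 ^ r0 * N.*2.+1)%N by rewrite leq_pmull.
    rewrite -addnn; lia.
  rewrite /rr lognM ?expn_gt0 // pfactorK // logn_coprime ?addn0 //.
  by rewrite coprime2n /= odd_double.
- exact: rr_lt.
Qed.

End PA.
Import PA.

Module PB.


Import Order.TTheory.
Local Open Scope fset_scope.

Section Pos.
Context {d : Order.disp_t} {W : orderType d}.

Definition below (F : {fset W}) (z : W) : {fset W} := [fset t in F | (t < z)%O].
Definition pos (F : {fset W}) (z : W) : nat := #|` below F z|.

Lemma belowP F z t : (t \in below F z) = (t \in F) && (t < z)%O.
Proof. by rewrite !inE. Qed.

Lemma below_sub F z : fsubset (below F z) F.
Proof. by apply/fsubsetP => t; rewrite belowP => /andP[]. Qed.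

Lemma pos_lt F z : z \in F -> (pos F z < #|` F|)%N.
Proof.
move=> zF; rewrite /pos (cardfsD1 z F) zF add1n ltnS.
apply: fsubset_leq_card; apply/fsubsetP => t; rewrite belowP !inE => /andP[tF tz].
by rewrite tF andbT; apply/eqP => e; move: tz; rewrite e ltxx.
Qed.

Lemma pos_lt_lt F a b : a \in F -> (a < b)%O -> (pos F a < pos F b)%N.
Proof.
move=> aF ab; rewrite /pos (cardfsD1 a (below F b)) belowP aF ab add1n ltnS.
apply: fsubset_leq_card; apply/fsubsetP => t; rewrite !belowP !inE => /andP[tF ta].
rewrite tF (lt_trans ta ab) andbT andbT; apply/eqP => e; move: ta; rewrite e ltxx.
by [].
Qed.

Lemma pos_inj F a b : a \in F -> b \in F -> pos F a = pos F b -> a = b.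
Proof.
move=> aF bF e; case: (ltgtP a b) => // h.
- by have := pos_lt_lt aF h; rewrite e ltnn.
- by have := pos_lt_lt bF h; rewrite e ltnn.
Qed.

Lemma pos_eq_sub A B z : fsubset A B ->
  (forall t, t \in B -> (t < z)%O -> t \in A) -> pos A z = pos B z.
Proof.
move=> AB H; congr (#|` _|); apply/fsetP => t; rewrite !belowP.
apply/andP/andP => [[tA tz]|[tB tz]]; split => //; last exact: H.
exact: (fsubsetP AB).
Qed.

Lemma pos_iso (phi : W -> W) A B z :
  (forall x y, x \in A -> y \in A -> (x < y)%O -> (phi x < phi y)%O) ->
  [fset phi x | x in A] = B -> z \in A -> pos A z = pos B (phi z).
Proof.
move=> inc img zA.
have inj : {in A &, injective phi}.
  move=> x y xA yA e; case: (ltgtP x y) => // h.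
  - by have := inc _ _ xA yA h; rewrite e ltxx.
  - by have := inc _ _ yA xA h; rewrite e ltxx.
rewrite /pos.
have -> : below B (phi z) = [fset phi x | x in below A z].
  apply/fsetP => u; rewrite belowP -img; apply/andP/imfsetP => [[/imfsetP[x /= xA ->] h]|[x /= + ->]].
  - exists x => //; rewrite belowP xA /=.
    case: (ltgtP x z) => // h2; first by have := inc _ _ zA xA h2; rewrite ltNge le_eqVlt h orbT.
    by move: h; rewrite h2 ltxx.
  - rewrite belowP => /andP[xA xz]; split; first by apply/imfsetP; exists x.
    exact: inc.
rewrite [RHS]card_in_imfset // => x y xb yb; apply: inj; exact: (fsubsetP (below_sub A z)).
Qed.

End Pos.

Section Scheme.
Context {d : Order.disp_t} {W : orderType d}.
Variable fam : set {fset W}.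
Hypothesis Hs : construction_scheme fam mm nn rr.

Lemma card_fam F : fam F -> #|` F| = mm (rank fam F).
Proof. by case: Hs => _ h _ _; apply: h. Qed.

Section Dec.
Variables (k : nat) (F : {fset W}) (Fs : nat -> {fset W}) (R : {fset W}).
Hypothesis HD : decomp_props fam nn rr k F Fs R.

Lemma dfam0 : fam (Fs 0) /\ rank fam (Fs 0) = k.
Proof. by case: HD => h _ _ _ _; apply: h. Qed.
Lemma dfam1 : fam (Fs 1) /\ rank fam (Fs 1) = k.
Proof. by case: HD => h _ _ _ _; apply: h. Qed.
Lemma dU : F = Fs 0 `|` Fs 1.
Proof. by case: HD => _ -> _ _ _; rewrite /nn /= !big_cons big_nil fsetU0. Qed.
Lemma dI : Fs 0 `&` Fs 1 = R.
Proof. by case: HD => _ _ h _ _; apply: h. Qed.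
Lemma dcardR : #|` R| = rr k.+1.
Proof. by case: HD. Qed.
Lemma dlt1 : fltS R (Fs 0 `\` R).
Proof. by case: HD => _ _ _ _ []. Qed.
Lemma dlt2 : fltS (Fs 0 `\` R) (Fs 1 `\` R).
Proof. by case: HD => _ _ _ _ [_ h]; apply: h. Qed.
Lemma dcard0 : #|` Fs 0| = mm k.
Proof. by case: dfam0 => h1 h2; rewrite card_fam // h2. Qed.
Lemma dcard1 : #|` Fs 1| = mm k.
Proof. by case: dfam1 => h1 h2; rewrite card_fam // h2. Qed.
Lemma dR0 : fsubset R (Fs 0).
Proof. by rewrite -dI fsubsetIl. Qed.
Lemma dR1 : fsubset R (Fs 1).
Proof. by rewrite -dI fsubsetIr. Qed.
Lemma dsub0 : fsubset (Fs 0) F.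
Proof. by rewrite dU fsubsetUl. Qed.
Lemma dsub1 : fsubset (Fs 1) F.
Proof. by rewrite dU fsubsetUr. Qed.
Lemma dcardD0 : #|` Fs 0 `\` R| = (mm k - rr k.+1)%N.
Proof. by rewrite cardfsDS ?dR0 // dcard0 dcardR. Qed.
Lemma dne0 : exists w, w \in Fs 0 `\` R.
Proof.
have : (0 < #|` Fs 0 `\` R|)%N by rewrite dcardD0; have := rr_lt k; lia.
by rewrite cardfs_gt0 => /fset0Pn.
Qed.
Lemma dltR1 : fltS R (Fs 1 `\` R).
Proof.
move=> a b aR bF; case: dne0 => w wD.
exact: lt_trans (dlt1 aR wD) (dlt2 wD bF).
Qed.
Lemma dHR a b : a \in R -> b \in F -> b \notin R -> (a < b)%O.
Proof.
move=> aR; rewrite dU inE => /orP[] bF bR.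
- by apply: dlt1 => //; rewrite inE bR.
- by apply: dltR1 => //; rewrite inE bR.
Qed.
Lemma dposR G z : fsubset R G -> fsubset G F -> z \in R -> pos G z = pos R z.
Proof.
move=> RG GF zR; symmetry; apply: pos_eq_sub => // t tG tz.
apply/negPn/negP => tR; have := dHR zR (fsubsetP GF _ tG) tR.
by rewrite ltNge le_eqVlt tz orbT.
Qed.
Lemma dposR_lt z : z \in R -> (pos R z < rr k.+1)%N.
Proof. by move=> zR; rewrite -dcardR; apply: pos_lt. Qed.
Lemma dpos_ge G z : fsubset R G -> (forall a, a \in R -> (a < z)%O) ->
  (rr k.+1 <= pos G z)%N.
Proof.
move=> RG H; rewrite -dcardR; apply: fsubset_leq_card; apply/fsubsetP => a aR.
by rewrite belowP (fsubsetP RG _ aR) H.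
Qed.
Lemma dpos0 z : z \in Fs 0 -> pos F z = pos (Fs 0) z.
Proof.
move=> z0; symmetry; apply: pos_eq_sub; first exact: dsub0.
move=> t; rewrite dU inE => /orP[] // t1 tz; apply/negPn/negP => t0.
have tR : t \notin R by apply/negP => tR; move: t0; rewrite (fsubsetP dR0 _ tR).
case zR : (z \in R).
- by have := dHR zR (fsubsetP dsub1 _ t1) tR; rewrite ltNge le_eqVlt tz orbT.
- have := dlt2 (a := z) (b := t); rewrite !inE zR tR z0 t1 => /(_ isT isT).
  by rewrite ltNge le_eqVlt tz orbT.
Qed.
Lemma dpos1 z : z \in Fs 1 -> z \notin R ->
  pos F z = (pos (Fs 1) z + (mm k - rr k.+1))%N.
Proof.
move=> z1 zR; rewrite /pos.
have -> : below F z = below (Fs 1) z `|` (Fs 0 `\` R).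
  apply/fsetP => t; rewrite !inE; apply/idP/idP.
  - move=> /andP[]; rewrite dU inE => /orP[] tF tz /=.
    + case tR : (t \in R) => /=; last by rewrite tF orbT.
      by rewrite (fsubsetP dR1 _ tR) tz.
    + by rewrite tF tz.
  - move=> /orP[/andP[t1 tz]|/andP[tR t0]].
    + by rewrite tz andbT dU inE t1 orbT.
    + rewrite dU inE t0 /=; apply: dlt2; rewrite inE ?tR ?t0 //.
      by rewrite zR z1.
rewrite cardfsU -dcardD0.
have -> : below (Fs 1) z `&` (Fs 0 `\` R) = fset0.
  apply/fsetP => t; rewrite !inE; apply/negP => /andP[/andP[t1 _] /andP[tR t0]].
  by move: tR; rewrite -dI inE t0 t1.
by rewrite cardfs0 subn0.
Qed.
End Dec.

Hypothesis HW : ~ countable [set: W].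

Lemma big_fset z s : exists A : {fset W}, z \in A /\ (s <= #|` A|)%N.
Proof.
elim: s => [|s [A [zA sA]]]; first by exists [fset z]; rewrite inE.
case: (leqP s.+1 #|` A|) => h; first by exists A.
have [w wA] : exists w, w \notin A.
  apply/not_existsP => H; apply: HW.
  apply: (@sub_countable _ _ _ [set` A]); last exact: countable_fset.
  by apply: subset_card_le => w _; have := H w; move/negP/negPn.
exists (w |` A); split; first by rewrite !inE zA orbT.
by rewrite cardfsU1 wA; lia.
Qed.

Lemma down l : forall F z, fam F -> rank fam F = l -> z \in F ->
  forall j, (j <= l)%N -> exists G, [/\ fam G, rank fam G = j & z \in G].
Proof.
elim: l => [|l IH] F z fF rF zF j.
  by rewrite leqn0 => /eqP ->; exists F.
rewrite leq_eqVlt => /orP[/eqP ->|]; first by exists F.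
rewrite ltnS => jl.
case: Hs => _ _ _ H4; have [Fs [R [HD _]]] := H4 l F fF rF.
move: zF; rewrite (dU HD) inE => /orP[] zF.
- by case: (dfam0 HD) => f0 r0; exact: IH f0 r0 zF j jl.
- by case: (dfam1 HD) => f0 r0; exact: IH f0 r0 zF j jl.
Qed.

Lemma ex_level j z : exists F, [/\ fam F, rank fam F = j & z \in F].
Proof.
have [A [zA sA]] := big_fset z (mm j).+1.
case: Hs => H1 _ _ _; have [F [fF AF]] := H1 A.
have zF : z \in F by exact: (fsubsetP AF).
apply: (down fF erefl zF).
have := fsubset_leq_card AF; rewrite (card_fam fF) => h.
rewrite leqNgt; apply/negP => h2.
have := mm_mono h2; lia.
Qed.

Definition Fl j z : {fset W} := proj1_sig (cid (ex_level j z)).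
Definition P j z : nat := pos (Fl j z) z.

Lemma P_spec j z F : fam F -> rank fam F = j -> z \in F -> P j z = pos F z.
Proof.
move=> fF rF zF; rewrite /P /Fl; case: cid => G /= [fG rG zG].
case: Hs => _ _ H3 _; have [[s1 i1] [s2 i2]] := H3 G F fG fF (etrans rG (esym rF)).
have zI : z \in G `&` F by rewrite inE zG zF.
rewrite -(@pos_eq_sub _ _ (G `&` F) G z s1); last by move=> t tG tz; apply: i1 tG zI tz.
by apply: pos_eq_sub => // t tF tz; apply: i2 tF zI tz.
Qed.

Lemma P_lt j z : (P j z < mm j)%N.
Proof.
rewrite /P /Fl; case: cid => G /= [fG rG zG].
by rewrite -rG -card_fam //; apply: pos_lt.
Qed.

Lemma P_down k z : P k z =
  if (P k.+1 z < mm k)%N then P k.+1 z else (P k.+1 z - (mm k - rr k.+1))%N.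
Proof.
have [F [fF rF zF]] := ex_level k.+1 z.
case: Hs => _ _ _ H4; have [Fs [R [HD _]]] := H4 k F fF rF.
rewrite (P_spec fF rF zF).
have [z0|z0] := boolP (z \in Fs 0).
  rewrite (dpos0 HD z0) -(dcard0 HD) pos_lt //.
  by case: (dfam0 HD) => f0 r0; rewrite (P_spec f0 r0 z0).
have z1 : z \in Fs 1 by move: (zF); rewrite (dU HD) inE (negbTE z0).
have zR : z \notin R by apply/negP => zR; move: z0; rewrite (fsubsetP (dR0 HD) _ zR).
have ge := dpos_ge HD (dR1 HD) (fun a aR => dltR1 HD (a:=a) (b:=z) aR (ltac:(by rewrite inE zR z1))).
rewrite (dpos1 HD z1 zR).
have := rr_lt k; move=> hr.
have -> : (pos (Fs 1) z + (mm k - rr k.+1) < mm k)%N = false by apply/negbTE; rewrite -leqNgt; lia.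
case: (dfam1 HD) => f1 r1; rewrite (P_spec f1 r1 z1); lia.
Qed.

Lemma P_agree j a b : P j a = P j b -> forall i, (i <= j)%N -> P i a = P i b.
Proof.
elim: j => [|j IH] e i; first by rewrite leqn0 => /eqP ->.
rewrite leq_eqVlt => /orP[/eqP -> //|]; rewrite ltnS; apply: IH.
by rewrite (P_down j a) (P_down j b) e.
Qed.

Lemma capture_P l F Fs R (phi : W -> W) : fam F -> rank fam F = l.+1 ->
  decomp_props fam nn rr l F Fs R ->
  (forall x y, x \in Fs 0 -> y \in Fs 0 -> (x < y)%O -> (phi x < phi y)%O) ->
  [fset phi x | x in Fs 0] = Fs 1 ->
  forall e, e \in Fs 0 ->
  (e \in R -> phi e = e) /\
  (e \notin R -> (forall i, (i <= l)%N -> P i e = P i (phi e)) /\ (P l.+1 e < P l.+1 (phi e))%N).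
Proof.
move=> fF rF HD inc img e e0.
have pe := pos_iso inc img e0.
have pe1 : phi e \in Fs 1 by rewrite -img; apply/imfsetP; exists e.
split => [eR|eR].
  have peR : phi e \in R.
    apply/negPn/negP => peR.
    have := dpos_ge HD (dR1 HD) (fun a aR => dltR1 HD (a:=a) (b:=phi e) aR (ltac:(by rewrite inE peR pe1))).
    rewrite -pe (dposR HD (dR0 HD) (dsub0 HD) eR); have := dposR_lt HD eR; lia.
  apply: (@pos_inj _ _ F); first exact: (fsubsetP (dsub1 HD)).
    exact: (fsubsetP (dsub0 HD)).
  rewrite (dposR HD (fsubset_trans (dR1 HD) (dsub1 HD)) (fsubset_refl _) peR).
  rewrite (dposR HD (fsubset_trans (dR1 HD) (dsub1 HD)) (fsubset_refl _) eR).
  rewrite -(dposR HD (dR1 HD) (dsub1 HD) peR) -pe.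
  by rewrite (dposR HD (dR0 HD) (dsub0 HD) eR).
have ge := dpos_ge HD (dR0 HD) (fun a aR => dlt1 HD (a:=a) (b:=e) aR (ltac:(by rewrite inE eR e0))).
have peR : phi e \notin R.
  apply/negP => peR; move: ge; rewrite pe (dposR HD (dR1 HD) (dsub1 HD) peR).
  have := dposR_lt HD peR; lia.
case: (dfam0 HD) => f0 r0; case: (dfam1 HD) => f1 r1.
split.
  apply: P_agree.
  by rewrite (P_spec f0 r0 e0) (P_spec f1 r1 pe1).
rewrite (P_spec fF rF (fsubsetP (dsub0 HD) _ e0)) (P_spec fF rF (fsubsetP (dsub1 HD) _ pe1)).
rewrite (dpos0 HD e0) (dpos1 HD pe1 peR) pe; have := rr_lt l; lia.
Qed.

Lemma P_sep a b : a <> b -> exists j, P j a <> P j b.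
Proof.
move=> ab; case: Hs => H1 _ _ _; have [F [fF AF]] := H1 [fset a; b].
have aF : a \in F by apply: (fsubsetP AF); rewrite !inE eqxx.
have bF : b \in F by apply: (fsubsetP AF); rewrite !inE eqxx orbT.
exists (rank fam F); rewrite (P_spec fF erefl aF) (P_spec fF erefl bF).
by move/(pos_inj aF bF).
Qed.

End Scheme.

End PB.
Import PB.

Module PC.
Import Order.TTheory GRing.Theory Num.Theory.

Section Reals.
Variable R : realType.
Local Open Scope ring_scope.

Definition NN (j : nat) : nat := (\prod_(i < j.+1) (4 * mm i))%N.
Definition ww (j : nat) : R := ((NN j)%:R)^-1.
Definition ss (p : nat -> nat) (n : nat) : R := \sum_(i < n) (p i)%:R * ww i.
Definition xr (p : nat -> nat) : R := sup (range (ss p)).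

Lemma NN_gt0 j : (0 < NN j)%N.
Proof.
rewrite /NN; elim/big_ind: _ => //; first by move=> a b; rewrite muln_gt0 => ->.
move=> i _; rewrite muln_gt0 /=; have := mm_ge i; lia.
Qed.

Lemma ww_gt0 j : 0 < ww j.
Proof. by rewrite /ww invr_gt0 ltr0n NN_gt0. Qed.

Lemma NN_S j : NN j.+1 = (NN j * (4 * mm j.+1))%N.
Proof. by rewrite /NN big_ord_recr. Qed.

Lemma ww_S j : 4%:R * (mm j.+1)%:R * ww j.+1 = ww j.
Proof.
rewrite /ww NN_S natrM natrM.
have h1 : (NN j)%:R != 0 :> R by rewrite pnatr_eq0 -lt0n NN_gt0.
have h2 : (mm j.+1)%:R != 0 :> R by rewrite pnatr_eq0 -lt0n; have := mm_ge j.+1; lia.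
have h3 : 4%:R != 0 :> R by rewrite pnatr_eq0.
rewrite invfM invfM; field; by rewrite ?h1 ?h2 ?h3 ?pnatr_eq0.
Qed.

Lemma ww_S_le j : 4%:R * ww j.+1 <= ww j.
Proof.
rewrite -[ww j]ww_S; have := ww_gt0 j.+1; have : 1 <= (mm j.+1)%:R :> R.
  by rewrite ler1n; have := mm_ge j.+1; lia.
move=> h1 h2; nra.
Qed.

Lemma ss_S p n : ss p n.+1 = ss p n + (p n)%:R * ww n.
Proof. by rewrite /ss big_ord_recr. Qed.

Lemma ss_mono p m n : (m <= n)%N -> ss p m <= ss p n.
Proof.
move=> /subnK <-; elim: (n - m)%N => [|t IH]; first by rewrite add0n.
rewrite addSn ss_S; apply: le_trans IH _; rewrite lerDl.
by apply: mulr_ge0; [exact: ler0n | exact: ltW (ww_gt0 _)].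
Qed.

Section P.
Variable p : nat -> nat.
Hypothesis hp : forall j, (p j < mm j)%N.

Lemma ss_tail j t : ss p (j.+1 + t) <= ss p j.+1 + (ww j - ww (j + t)) / 3%:R.
Proof.
elim: t => [|t IH]; first by rewrite !addn0 subrr mul0r addr0.
rewrite addnS ss_S; have := ww_S (j + t); have := ww_S_le (j + t).
have hpn : (p (j.+1 + t))%:R <= (mm (j + t).+1)%:R :> R.
  by rewrite ler_nat; have := hp (j.+1 + t); rewrite addSn; lia.
have hw := ww_gt0 (j + t).+1.
have : (p (j.+1 + t))%:R * ww (j.+1 + t) <= (mm (j + t).+1)%:R * ww (j + t).+1.
  by rewrite addSn; apply: ler_wpM2r => //; exact: ltW.
rewrite addSn addnS; move: IH; set a := ss p _; set b := ss p _.
set u := ww (j + t).+1; set v := ww (j + t); set c := (p _)%:R * _; set e := _ * u.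
move=> IH hc h1 h2; have h3 : 4 * e = v by rewrite /e mulrA. lra.
Qed.

Lemma ss_ub j n : ss p n <= ss p j.+1 + ww j / 3%:R.
Proof.
case: (leqP n j.+1) => h.
  apply: le_trans (ss_mono p h) _; rewrite lerDl; apply: divr_ge0; last by [].
  exact: ltW (ww_gt0 _).
rewrite -(subnKC (ltnW h)); apply: le_trans (ss_tail _ _) _.
have := ww_gt0 (j + (n - j.+1)); lra.
Qed.

Lemma has_sup_ss : has_sup (range (ss p)).
Proof.
split; first by exists (ss p 0), 0%N.
exists (ss p 1 + ww 0 / 3%:R) => _ [n _ <-]; exact: ss_ub.
Qed.

Lemma xr_ge n : ss p n <= xr p.
Proof. by apply: sup_upper_bound; [exact: has_sup_ss | exists n]. Qed.

Lemma xr_le j : xr p <= ss p j.+1 + ww j / 3%:R.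
Proof. by apply: ge_sup; [exists (ss p 0), 0%N | move=> _ [n _ <-]; exact: ss_ub]. Qed.

Lemma xr_01 : 0 <= xr p <= 1.
Proof.
apply/andP; split; first by apply: le_trans (xr_ge 0); rewrite /ss big_ord0.
apply: le_trans (xr_le 0) _.
have p0 : p 0 = 0%N by have := hp 0; rewrite /= ltnS leqn0 => /eqP.
rewrite /ss big_ord_recr big_ord0 p0 mul0r /= addr0 add0r.
have : ww 0 <= 1 by rewrite /ww /NN big_ord_recr big_ord0 /= invf_le1 // ?ler1n ?ltr0n.
have := ww_gt0 0.
lra.
Qed.
End P.

Lemma ss_eq p q j : (forall i, (i < j)%N -> p i = q i) -> ss p j = ss q j.
Proof. by move=> h; apply: eq_bigr => i _; rewrite h. Qed.

Lemma xr_lex p q j : (forall j, (p j < mm j)%N) -> (forall j, (q j < mm j)%N) ->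
  (forall i, (i < j)%N -> p i = q i) -> (p j < q j)%N -> xr p < xr q.
Proof.
move=> hp hq he hlt.
apply: le_lt_trans (xr_le hp j) _; apply: lt_le_trans (xr_ge hq j.+1).
rewrite !ss_S (ss_eq he).
have : (p j)%:R + 1 <= (q j)%:R :> R by rewrite -[1]/(1%:R) -natrD ler_nat addn1.
have hw := ww_gt0 j.
move=> h; have : ((p j)%:R + 1) * ww j <= (q j)%:R * ww j by rewrite ler_pM2r.
lra.
Qed.

End Reals.

End PC.
Import PC.

Module PD.
Import Order.TTheory.
Local Open Scope classical_set_scope.
Local Open Scope order_scope.
Local Open Scope card_scope.

Lemma card_le_fun T U (A : set T) (B : set U) (f : T -> U) :
  (forall x, A x -> B (f x)) -> (forall x y, A x -> A y -> f x = f y -> x = y) -> A #<= B.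
Proof.
move=> hf hi; have [g] : $|{injfun A >-> B}|.
  by apply/injfunPex; exists f => // x y /set_mem Ax /set_mem Ay; exact: hi.
exact: inj_card_le.
Qed.

Section Omega1.
Context {d : Order.disp_t} {W : orderType d}.
Hypothesis HW : omega1_like W.

Lemma wf_lt : well_founded (fun x y : W => x < y).
Proof. by case: HW. Qed.
Lemma unc_W : ~ countable [set: W].
Proof. by case: HW. Qed.
Lemma cnt_pred (a : W) : countable [set y : W | y < a].
Proof. by case: HW => _ _; apply. Qed.

Lemma cnt_le (a : W) : countable [set y : W | y <= a].
Proof.
have -> : [set y : W | y <= a] = \bigcup_(i in [set: bool]) (if i then [set y | y < a] else [set a]).
  apply/seteqP; split => y /=.
    rewrite le_eqVlt => /orP[/eqP ->|h]; first by exists false.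
    by exists true.
  by case=> -[] _ /= h; [exact: ltW | rewrite h].
apply: bigcup_countable; first exact: countableP.
by case=> _; [exact: cnt_pred | exact: countable1].
Qed.

Lemma wf_min (M : set W) : (exists x, M x) ->
  exists y, M y /\ forall z, M z -> y <= z.
Proof.
move=> [x Mx]; apply: contrapT => H.
suff : forall x, ~ M x by move/(_ x).
move=> {Mx}x; elim/(well_founded_induction wf_lt): x => x IH Mx.
apply: H; exists x; split => // z Mz; rewrite leNgt; apply/negP => zx.
exact: IH zx Mz.
Qed.

Lemma unc_sub (Y Z : set W) : ~ countable Y -> countable Z -> exists y, Y y /\ ~ Z y.
Proof.
move=> hY hZ; apply: contrapT => H; apply: hY.
apply: sub_countable hZ; apply: subset_card_le => y Yy.
by apply: contrapT => Zy; apply: H; exists y.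
Qed.

Section Embed.
Variable Y : set W.
Hypothesis hY : ~ countable Y.

Definition Mset (a : W) (rec : forall b : W, b < a -> W) : set W :=
  [set y | (Y y /\ forall b (h : b < a), rec b h < y) /\
           forall z, (Y z /\ forall b (h : b < a), rec b h < z) -> y <= z].

Definition Frec (a : W) (rec : forall b : W, b < a -> W) : W := xget a (Mset rec).

Definition emb : W -> W := Fix wf_lt (fun _ => W) Frec.

Lemma emb_eq a : emb a = xget a (Mset (fun b (_ : b < a) => emb b)).
Proof.
rewrite /emb Fix_eq //= => x f g H.
have -> // : f = g.
by apply: functional_extensionality_dep => b; apply: functional_extensionality_dep => h.
Qed.

Lemma emb_spec a : Y (emb a) /\ forall b, b < a -> emb b < emb a.
Proof.
rewrite emb_eq; set M := Mset _.
suff : M (xget a M) by rewrite /M /Mset /= => -[[H1 H2] _]; split => // b h; exact: H2 b h.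
apply: xgetPex.
have hK : countable (\bigcup_(b in [set b | b < a]) [set z | z <= emb b]).
  by apply: bigcup_countable; [exact: cnt_pred | move=> b _; exact: cnt_le].
have [y [Yy Ky]] := unc_sub hY hK.
have hy : forall b (h : b < a), emb b < y.
  move=> b h; rewrite ltNge; apply/negP => hh; apply: Ky; by exists b.
have [m [[Ym Hm] Hmin]] := wf_min (M := [set y | Y y /\ forall b (h : b < a), emb b < y]) (ex_intro _ y (conj Yy hy)).
by exists m; rewrite /M /Mset /=; split => //.
Qed.

Lemma emb_inj : injective emb.
Proof.
move=> a b e; case: (ltgtP a b) => // h.
- by have := (emb_spec b).2 a h; rewrite e ltxx.
- by have := (emb_spec a).2 b h; rewrite e ltxx.
Qed.

Lemma W_le_unc : [set: W] #<= Y.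
Proof.
apply: (@card_le_fun _ _ _ _ emb) => [x _|x y _ _]; [exact: (emb_spec x).1 | exact: emb_inj].
Qed.
End Embed.

Lemma cntU2 (A B : set W) : countable A -> countable B -> countable (A `|` B)%classic.
Proof.
move=> hA hB.
have -> : (A `|` B)%classic = \bigcup_(i in [set: bool]) (if i then A else B).
  apply/seteqP; split => y /=; first by case=> h; [exists true | exists false].
  by case=> -[] _ h; [left | right].
apply: bigcup_countable; first exact: countableP.
by case.
Qed.

Lemma unc_gt a : ~ countable [set b : W | a < b].
Proof.
move=> h; apply: unc_W; apply: sub_countable (cntU2 (cnt_le a) h).
apply: subset_card_le => y _ /=; case: (leP y a) => hy; [left | right] => //.
Qed.

Lemma unc_bigcup (F : nat -> set W) (A : set W) : ~ countable A ->
  A `<=` \bigcup_(n in [set: nat]) F n -> exists n, ~ countable (F n).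
Proof.
move=> hA sub; apply: contrapT => H; apply: hA.
apply: sub_countable; first exact: (subset_card_le sub).
apply: bigcup_countable; first exact: countableP.
move=> n _; apply: contrapT => hn; apply: H; by exists n.
Qed.

Lemma ulam : exists Wn : nat -> set W,
  (forall k, ~ countable (Wn k)) /\ (forall i j x, Wn i x -> Wn j x -> i = j).
Proof.
pose ee (b : W) : W -> nat := proj1_sig (cid (elimT (countable_injP _) (cnt_pred b))).
have eeP b : {in [set y | y < b] &, injective (ee b)}.
  by rewrite /ee; case: cid.
pose T n a := [set b : W | a < b /\ ee b a = n].
have hT a : exists n, ~ countable (T n a).
  apply: (@unc_bigcup (fun n => T n a) [set b : W | a < b] (@unc_gt a)); move=> b /= ab; by exists (ee b a).
pose nn a := proj1_sig (cid (hT a)).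
have nnP a : ~ countable (T (nn a) a) by rewrite /nn; case: cid.
have [n0 hn0] : exists n, ~ countable [set a | nn a = n].
  apply: (@unc_bigcup (fun n => [set a | nn a = n]) setT unc_W) => a _; by exists (nn a).
pose Z := [set a | nn a = n0].
have [w0 _] : exists w, Z w.
  apply: contrapT => h; apply: hn0; apply: sub_countable (countable0 W).
  by apply: subset_card_le => y Zy; apply: h; exists y.
pose aseq := fix aseq (k : nat) : seq W :=
  if k is k'.+1 then xget w0 [set y | Z y /\ y \notin aseq k'] :: aseq k' else [::].
have aseqS k : aseq k.+1 = xget w0 [set y | Z y /\ y \notin aseq k] :: aseq k by [].
have aP k : Z (xget w0 [set y | Z y /\ y \notin aseq k]) /\
            xget w0 [set y | Z y /\ y \notin aseq k] \notin aseq k.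
  apply: (@xgetPex _ w0 [set y | Z y /\ y \notin aseq k]).
  have hc : countable [set` aseq k].
    exact: finite_set_countable (finite_seq _).
  have [y [Zy hy]] := unc_sub hn0 hc; exists y; split => //; exact/negP.
pose a k := xget w0 [set y | Z y /\ y \notin aseq k].
have ain i j : (i < j)%N -> a i \in aseq j.
  elim: j => // j IH; rewrite ltnS leq_eqVlt => /orP[/eqP ->|h].
    by rewrite aseqS inE eqxx.
  by rewrite aseqS inE (IH h) orbT.
have ainj i j : a i = a j -> i = j.
  move=> e; case: (ltngtP i j) => // h.
  - by have := (aP j).2; rewrite -/(a j) -e (ain _ _ h).
  - by have := (aP i).2; rewrite -/(a i) e (ain _ _ h).
exists (fun k => T n0 (a k)); split.
  by move=> k; have := nnP (a k); rewrite (aP k).1.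
move=> i j x [hi ei] [hj ej]; apply: ainj; apply: (eeP x).
- by rewrite in_setE.
- by rewrite in_setE.
- by rewrite ei ej.
Qed.
End Omega1.

End PD.
Import PD.

Module PE.
Import Order.TTheory GRing.Theory Num.Theory.
Local Open Scope classical_set_scope.
Local Open Scope card_scope.

Lemma pair_eq {d : Order.disp_t} {W : orderType d} (x y x' y' : W) :
  (x < y)%O -> (x' < y')%O -> [fset x; y]%fset = [fset x'; y']%fset -> x = x' /\ y = y'.
Proof.
move=> xy xy' e.
have hx : x \in [fset x'; y']%fset by rewrite -e !inE eqxx.
have hy : y \in [fset x'; y']%fset by rewrite -e !inE eqxx orbT.
have hx' : x' \in [fset x; y]%fset by rewrite e !inE eqxx.
move: hx hy hx'; rewrite !inE => /orP[]/eqP ex /orP[]/eqP ey /orP[]/eqP ex'; subst => //;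
  by move: xy xy'; rewrite ?ltxx // => h1 h2; have := lt_trans h1 h2; rewrite ltxx.
Qed.

Lemma imfset_pair {d : Order.disp_t} {W : orderType d} (phi : W -> W) (p q : W) :
  [fset phi z | z in [fset p; q]%fset]%fset = [fset phi p; phi q]%fset.
Proof.
apply/fsetP => z; rewrite !inE; apply/imfsetP/orP => [[w /= + ->]|[]/eqP ->].
- by rewrite !inE => /orP[]/eqP ->; [left | right].
- by exists p; rewrite //= !inE eqxx.
- by exists q; rewrite //= !inE eqxx orbT.
Qed.

Section Main.
Context {d : Order.disp_t} {W : orderType d}.
Hypothesis HW : omega1_like W.
Variable fam : set {fset W}.
Hypothesis Hs : construction_scheme fam mm nn rr.
Hypothesis Hcap : n_capturing 2 fam nn rr.
Variable R : realType.

Let hW := unc_W HW.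
Definition xx (a : W) : R := xr R (fun j => P Hs hW j a).

Lemma PL a : forall j, (P Hs hW j a < mm j)%N.
Proof. by move=> j; apply: P_lt. Qed.

Lemma xx_inj : injective xx.
Proof.
move=> a b e; apply: contrapT => ab.
have hex : exists j, P Hs hW j a != P Hs hW j b.
  by have [j hj] := P_sep Hs hW ab; exists j; apply/eqP.
case: (ex_minnP hex) => j hj hmin.
have hlow : forall i, (i < j)%N -> P Hs hW i a = P Hs hW i b.
  move=> i ij; apply/eqP; apply: contraTT ij => h; rewrite -leqNgt; exact: hmin.
case: (ltngtP (P Hs hW j a) (P Hs hW j b)) => h.
- by have := xr_lex R (PL a) (PL b) hlow h; rewrite -/(xx a) -/(xx b) e ltxx.
- have hlow' : forall i, (i < j)%N -> P Hs hW i b = P Hs hW i a by move=> i /hlow.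
  by have := xr_lex R (PL b) (PL a) hlow' h; rewrite -/(xx a) -/(xx b) e ltxx.
- by move: hj; rewrite h eqxx.
Qed.

Lemma Kx l F Fs Rt (phi : W -> W) : fam F -> rank fam F = l.+1 ->
  decomp_props fam nn rr l F Fs Rt ->
  (forall x y, x \in Fs 0 -> y \in Fs 0 -> (x < y)%O -> (phi x < phi y)%O) ->
  [fset phi x | x in Fs 0]%fset = Fs 1 ->
  forall e, e \in Fs 0 -> (xx e <= xx (phi e))%R /\ (e \notin Rt -> (xx e < xx (phi e))%R).
Proof.
move=> fF rF HD inc img e e0.
have [h1 h2] := capture_P Hs hW fF rF HD inc img e0.
have hlt : e \notin Rt -> (xx e < xx (phi e))%R.
  move=> eR; have [hlow hl] := h2 eR.
  apply: xr_lex (PL _) (PL _) _ hl => i; rewrite ltnS; exact: hlow.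
split => //; case eR : (e \in Rt); first by rewrite h1.
by apply: ltW; apply: hlt; rewrite eR.
Qed.


Lemma GL (U : set W) (u v : W -> W) : ~ countable U ->
  (forall a, U a -> (u a < v a)%O) ->
  (forall a b, U a -> U b -> u a = u b -> a = b) ->
  (forall a b, U a -> U b -> (xx (u a) < xx (u b))%R -> (xx (v b) < xx (v a))%R) -> False.
Proof.
move=> hU huv hinj hrev.
pose S := [set [fset u a; v a]%fset | a in U].
have hS : ~ countable S.
  move=> cS; apply: hU; apply: card_le_trans cS.
  apply: (@card_le_fun _ _ _ _ (fun a => [fset u a; v a]%fset)) => [a Ua|a b Ua Ub e].
    by exists a.
  by case: (pair_eq (huv a Ua) (huv b Ub) e) => h _; exact: hinj Ua Ub h.
have [C [hC CS [l [F [kl fF rF cap]]]]] := Hcap hS 0.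
case: cap => l1 [_ [Fs [Rt [HD [cs [ucs Ccs hcs]]]]]].
have sz : size cs = 2.
  by rewrite -hC; apply/esym/perm_size/uniq_perm => //.
case: l l1 kl rF HD hcs => // l _ _ rF /= HD hcs.
have [c0sub c0R _] := hcs 0 ltac:(by rewrite sz).
have [c1sub _ [phi [inc img imc]]] := hcs 1 ltac:(by rewrite sz).
move: c0sub c0R c1sub imc.
set c0 := nth fset0 cs 0; set c1 := nth fset0 cs 1 => c0sub c0R c1sub imc.
have c01 : c0 != c1 by rewrite /c0 /c1 nth_uniq ?sz.
have [a Ua ea] : S c0 by apply: CS; rewrite Ccs mem_nth ?sz.
have [b Ub eb] : S c1 by apply: CS; rewrite Ccs mem_nth ?sz.
have ua0 : u a \in Fs 0 by apply: (fsubsetP c0sub); rewrite -ea !inE eqxx.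
have va0 : v a \in Fs 0 by apply: (fsubsetP c0sub); rewrite -ea !inE eqxx orbT.
have vaR : v a \notin Rt.
  apply/negP => vaR; move/negP: c0R; apply; apply/eqP/fsetP => z; rewrite !inE -ea !inE.
  have uaR : u a \in Rt.
    apply/negPn/negP => uaR.
    have := dlt1 HD (a := v a) (b := u a) vaR; rewrite !inE uaR ua0 => /(_ isT) h.
    by have := lt_trans h (huv a Ua); rewrite ltxx.
  by apply/negP => /andP[zR] /orP[]/eqP ez; move: zR; rewrite ez ?uaR ?vaR.
have [Ku _] := Kx fF rF HD inc img ua0.
have [_ Kv] := Kx fF rF HD inc img va0.
have Kv' := Kv vaR.
move: imc; rewrite -ea -eb imfset_pair => /pair_eq [].
  by apply: inc => //; exact: huv.
  exact: huv.
move=> e1 e2; rewrite e1 e2 in Ku Kv'.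
move: Ku; rewrite le_eqVlt => /orP[/eqP /xx_inj /(hinj _ _ Ua Ub) eab|hlt].
  by move: c01; rewrite -ea -eb eab eqxx.
by have := hrev _ _ Ua Ub hlt; rewrite ltNge le_eqVlt Kv' orbT.
Qed.

Section Fin.
Variable Wn : nat -> set W.
Hypothesis hWn : forall k, ~ countable (Wn k).
Hypothesis hdis : forall i j x, Wn i x -> Wn j x -> i = j.

Definition dec (n : nat) : nat * rat := odflt (0%N, 0%R) (choice.unpickle n).
Definition cc (n : nat) : R := (((dec n).1.+1)%:R)^-1.
Definition dd (n : nat) : R := ratr (dec n).2.
Definition pi (a : W) : nat := xget 0%N [set k | Wn k a].
Definition yy (a : W) : R := (dd (pi a) + cc (pi a) * xx a)%R.

Lemma pi_spec k a : Wn k a -> pi a = k.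
Proof.
move=> h; rewrite /pi; have : [set k | Wn k a] (xget 0%N [set k | Wn k a]).
  by apply: xgetPex; exists k.
by move=> /= h2; exact: hdis h2 h.
Qed.

Lemma cc_gt0 n : (0 < cc n)%R.
Proof. by rewrite /cc invr_gt0 ltr0n. Qed.

Lemma xx01 a : (0 <= xx a <= 1)%R.
Proof. exact: xr_01 (PL a). Qed.

Lemma dense_gen (Y : W -> R) :
  (forall a b, (a < b)%R -> exists k, (forall z, Wn k z -> (a < Y z < b)%R) /\
     (forall z1 z2, Wn k z1 -> Wn k z2 -> Y z1 = Y z2 -> z1 = z2)) ->
  omega1_dense W (range Y).
Proof.
move=> H a b ab; have [k [hin hinj]] := H a b ab.
apply/card_eqPle; split.
  have sub : ([set x | (a < x < b)%R] `&` range Y) `<=` range Y by move=> t [].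
  exact: card_le_trans (subset_card_le sub) (card_image_le Y setT).
apply: card_le_trans (W_le_unc HW (@hWn k)) _.
apply: (@card_le_fun _ _ _ _ Y) => [z hz|]; last exact: hinj.
by split; [exact: hin | exists z].
Qed.

Lemma yy_loc a b : (a < b)%R -> exists k, (forall z, Wn k z -> (a < yy z < b)%R) /\
     (forall z1 z2, Wn k z1 -> Wn k z2 -> yy z1 = yy z2 -> z1 = z2).
Proof.
move=> ab.
pose t : R := (2 / (b - a))%R.
have ht : (0 < t)%R by rewrite /t divr_gt0 // subr_gt0.
pose k0 := Num.truncn t.
have hk0 : (t < k0.+1%:R)%R by exact: truncnS_gt.
have [q hq] := rat_in_itvoo (x := a) (y := ((a + b) / 2)%R) ltac:(lra).
move: hq; rewrite in_itv /= => /andP[hq1 hq2].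
exists (choice.pickle (k0, q)).
have hdec : dec (choice.pickle (k0, q)) = (k0, q) by rewrite /dec choice.pickleK.
have hc : (cc (choice.pickle (k0, q)) < (b - a) / 2)%R.
  rewrite /cc hdec /=.
  have hk : (0 < k0.+1%:R :> R)%R by rewrite ltr0n.
  have hba : (0 < b - a)%R by rewrite subr_gt0.
  have h2 : (2 < k0.+1%:R * (b - a))%R by move: hk0; rewrite /t ltr_pdivrMr.
  have hK : (k0.+1%:R * (k0.+1%:R)^-1 = 1 :> R)%R by rewrite mulfV // lt0r_neq0.
  have hi : (0 < (k0.+1%:R)^-1 :> R)%R by rewrite invr_gt0.
  move: hK hi h2 hk; set K := (k0.+1%:R : R)%R; set iK := (K^-1)%R => hK hi h2 hk.
  nra.
have hcp := cc_gt0 (choice.pickle (k0, q)).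
split.
  move=> z hz; rewrite /yy (pi_spec hz) /dd hdec /=.
  have := xx01 z; move=> /andP[h0 h1].
  move: hc hcp; set c := cc _ => hc hcp.
  have : (0 <= c * xx z <= c)%R.
    apply/andP; split; first exact: mulr_ge0 (ltW hcp) h0.
    by rewrite -[X in (_ <= X)%R]mulr1 ler_wpM2l // ltW.
  move=> /andP[]; lra.
move=> z1 z2 h1 h2; rewrite /yy (pi_spec h1) (pi_spec h2) => e.
apply: xx_inj; apply: (mulfI (lt0r_neq0 hcp)); exact: (addrI _ e).
Qed.

Lemma yy_dense : omega1_dense W (range yy).
Proof. exact: dense_gen yy_loc. Qed.

Lemma nyy_dense : omega1_dense W (range (fun a => - yy a)%R).
Proof.
apply: dense_gen => a b ab.
have [k [hin hinj]] := yy_loc (a := (- b)%R) (b := (- a)%R) ltac:(by rewrite ltrN2).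
exists k; split.
  by move=> z /hin /andP[h1 h2]; rewrite ltrNr h2 ltrNl h1.
by move=> z1 z2 h1 h2 /oppr_inj; apply: hinj.
Qed.

Lemma not_iso : ~ order_isomorphic (range yy) (range (fun a => - yy a)%R).
Proof.
move=> [f [[hfun hinj _] hinc]].
have hex a : exists b, (- yy b = f (yy a))%R.
  have : range (fun a => - yy a)%R (f (yy a)) by apply: hfun; exists a.
  by case=> b _ e; exists b.
pose h a := proj1_sig (cid (hex a)).
have hh a : f (yy a) = (- yy (h a))%R by rewrite /h; case: cid => b /= ->.
have mono a b : (yy a < yy b)%R -> (yy (h b) < yy (h a))%R.
  move=> lt; have := hinc _ _ (ex_intro2 _ _ a I erefl) (ex_intro2 _ _ b I erefl) lt.
  by rewrite !hh ltrN2.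
pose nF n := [set a | choice.pickle (pi a, pi (h a)) = n].
have [n hn] : exists n, ~ countable (nF n).
  apply: (@unc_bigcup _ _ nF setT hW) => a _; by exists (choice.pickle (pi a, pi (h a))).
pose U := nF n.
have hU a b : U a -> U b -> pi a = pi b /\ pi (h a) = pi (h b).
  rewrite /U /nF /= => ea eb; have := ea; rewrite -eb => /(pcan_inj choice.pickleK) [] -> -> //.
have lin a b : U a -> U b -> ((xx a < xx b)%R <-> (yy a < yy b)%R) /\
                            ((xx (h a) < xx (h b))%R <-> (yy (h a) < yy (h b))%R).
  move=> ua ub; have [e1 e2] := hU a b ua ub; rewrite /yy e1 e2.
  by split; rewrite ltrD2l ltr_pM2l ?cc_gt0.
have revU a b : U a -> U b -> (xx a < xx b)%R -> (xx (h b) < xx (h a))%R.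
  move=> ua ub lt; have [[l1 _] _] := lin a b ua ub.
  have [_ [_ l2]] := lin b a ub ua; exact/l2/mono/l1.
have hinjU a b : U a -> U b -> h a = h b -> a = b.
  move=> ua ub e; have : f (yy a) = f (yy b) by rewrite !hh e.
  move=> /hinj; rewrite !inE => /(_ (ex_intro2 _ _ a I erefl) (ex_intro2 _ _ b I erefl)).
  rewrite /yy (hU a b ua ub).1 => /addrI /(mulfI (lt0r_neq0 (cc_gt0 _))); exact: xx_inj.
have revU2 a b : U a -> U b -> (xx (h a) < xx (h b))%R -> (xx b < xx a)%R.
  move=> ua ub lt; case: (ltgtP (xx a) (xx b)) => // hab.
  - by have := revU _ _ ua ub hab; rewrite ltNge le_eqVlt lt orbT.
  - by move: lt; rewrite (xx_inj hab) ltxx.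
have cFix : countable [set a | U a /\ h a = a].
  case: (pselect (exists a0, U a0 /\ h a0 = a0)) => [[a0 [u0 f0]]|hno].
    apply: sub_countable (countable1 a0); apply: subset_card_le => a [ua fa] /=.
    apply: contrapT => ne; case: (ltgtP (xx a) (xx a0)) => hl.
    - by have := revU _ _ ua u0 hl; rewrite fa f0 ltNge le_eqVlt hl orbT.
    - by have := revU _ _ u0 ua hl; rewrite fa f0 ltNge le_eqVlt hl orbT.
    - by apply: ne; apply: xx_inj.
  apply: sub_countable (countable0 W); apply: subset_card_le => a ha; apply: hno; by exists a.
have : ~ countable [set a | U a /\ (a < h a)%O] \/ ~ countable [set a | U a /\ (h a < a)%O].
  apply: contrapT => /not_orP [/contrapT c1 /contrapT c2]; apply: hn.
  apply: sub_countable (cntU2 (cntU2 c1 c2) cFix).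
  apply: subset_card_le => a ua /=; case: (ltgtP a (h a)) => hl.
  - by left; left.
  - by left; right.
  - by right.
case=> hc.
- apply: (@GL _ (fun a => a) h hc) => [a []|a b _ _ //|a b [ua _] [ub _]] //.
  exact: revU.
- apply: (@GL _ h (fun a => a) hc) => [a []|a b [ua _] [ub _]|a b [ua _] [ub _]] //.
    exact: hinjU.
  exact: revU2.
Qed.

End Fin.
End Main.

End PE.
Import PE.

Theorem mainTheorem14 (d : Order.disp_t) (W : orderType d) :
  omega1_like W -> CA 2 W ->
  forall R : realType, exists A B : set R,
    [/\ omega1_dense W A, omega1_dense W B & ~ order_isomorphic A B].
Proof.
move=> HW HCA R.
have [fam [Hs Hcap]] := HCA mm nn rr is_type_ok (fun k _ => leqnn 2).
have [Wn [hWn hdis]] := ulam HW.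
exists (range (yy HW Hs R Wn)), (range (fun a => - yy HW Hs R Wn a)%R); split.
- exact: yy_dense hWn hdis.
- exact: nyy_dense hWn hdis.
- exact: (not_iso Hcap).
Qed.
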